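(* Let $X$ be a finite alphabet with at least two letters and $k\ge2$. For every $F\in\mathcal F_{\mathcal T_k}$, $$\mathcal R\mathbf\Sigma(F)=\{A\circ f_{\mathcal M}\mid \mathcal M\text{ an automaton over }X,\ A:C_{\mathcal M}\to\bar k,\ A\in\mathcal C_{\mathcal M}(F)\}.$$
   Context: Automaton $\mathcal M=(Q,f,in)$: $f_{\mathcal M}(\xi)$ is the set of states visited infinitely often on input $\xi$, $C_{\mathcal M}=\{f_{\mathcal M}(\xi):\xi\in X^\omega\}$. On $C_{\mathcal M}$: $c\le_0 d$ iff some (equivalently every) state of $d$ is reachable from some (equivalently every) state of $c$; $c\le_1 d$ iff $c\supseteq d$. $\mathcal C_{\mathcal M}=(\mathcal C_0,\mathcal C_1)$ where $\mathcal C_i$ is the family of $\le_i$-up subsets of $C_{\mathcal M}$. $\mathcal R$ is the class of regular $\omega$-languages; $\mathcal R\mathbf\Sigma=(\mathcal R\cap\mathbf\Sigma^0_1,\mathcal R\cap\mathbf\Sigma^0_2)$ with $\mathbf\Sigma^0_1$ the open and $\mathbf\Sigma^0_2$ the countable unions of closed subsets of $X^\omega$. Forests: finite $F\subseteq\omega^+$ closed under nonempty prefixes; trees: finite prefix-closed $V\subseteq\omega^*$; $\mathcal F_{\mathcal T_k}$: forests $(F,c)$ whose labels $c(\tau)=(V,v)$ are $\bar k$-labeled trees. For a 2-base $\mathcal L=(\mathcal L_0,\mathcal L_1)$ in $S$ (families closed under finite $\cup,\cap$ containing $\emptyset,S$), an $F$-family is $\{U_\tau\}_{\tau\in F}\subseteq\mathcal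 L_0$ with $U_{\tau i}\subseteq U_\tau$, $\bigcup U_\tau=S$, plus for each $\tau$ with $c(\tau)=(V,v)$ sets $U_{\tau\sigma}=\tilde U_\tau\cap B_{\tau\sigma}$ ($B_{\tau\sigma}\in\mathcal L_1$, $\sigma\in V$) with $U_{\tau\sigma i}\subseteq U_{\tau\sigma}$, $\bigcup_\sigma U_{\tau\sigma}=\tilde U_\tau$, where $\tilde U_\tau=U_\tau\setminus\bigcup_{\tau i\in F}U_{\tau i}$; it determines $A:S\to\bar k$ if $A(x)=v(\sigma)$ whenever $x\in U_{\tau\sigma}\setminus\bigcup_{\sigma i\in V}U_{\tau\sigma i}$. $\mathcal L(F)$ is the set of $k$-partitions of $S$ determined by some $F$-family over $\mathcal L$; this defines both $\mathcal R\mathbf\Sigma(F)$ and $\mathcal C_{\mathcal M}(F)$. *)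

(* Defs.v *)
From mathcomp Require Import all_boot.
Set Implicit Arguments. Unset Strict Implicit. Unset Printing Implicit Defensive.

Section Automata.
Variable X : finType.

Fixpoint run (Q : finType) (f : Q -> X -> Q) (qin : Q) (xi : nat -> X) (n : nat) : Q :=
  match n with
  | 0 => qin
  | m.+1 => f (run f qin xi m) (xi m)
  end.

Definition fM (Q : finType) (f : Q -> X -> Q) (qin : Q) (xi : nat -> X) : Q -> Prop :=
  fun q => forall N, exists n, N <= n /\ run f qin xi n = q.

Definition CM (Q : finType) (f : Q -> X -> Q) (qin : Q) : Type :=
  {c : Q -> Prop | exists xi : nat -> X, fM f qin xi = c}.

Definition toCM (Q : finType) (f : Q -> X -> Q) (qin : Q) (xi : nat -> X) : CM f qin :=
  exist _ (fM f qin xi) (ex_intro _ xi erefl).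

Definition reachable (Q : finType) (f : Q -> X -> Q) (q q' : Q) : Prop :=
  exists w : seq X, foldl f q w = q'.

Definition le0 (Q : finType) (f : Q -> X -> Q) (qin : Q) (c d : CM f qin) : Prop :=
  exists q q', sval c q /\ sval d q' /\ reachable f q q'.

Definition le1 (Q : finType) (f : Q -> X -> Q) (qin : Q) (c d : CM f qin) : Prop :=
  forall q, sval d q -> sval c q.

Definition upset (S : Type) (le : S -> S -> Prop) (P : S -> Prop) : Prop :=
  forall c d, le c d -> P c -> P d.

(* the 2-base C_M = (C_0, C_1) of up-sets in C_M *)
Definition CM0 (Q : finType) (f : Q -> X -> Q) (qin : Q) (P : CM f qin -> Prop) : Prop :=
  upset (@le0 Q f qin) P.
Definition CM1 (Q : finType) (f : Q -> X -> Q) (qin : Q) (P : CM f qin -> Prop) : Prop :=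
  upset (@le1 Q f qin) P.

(* regular = recognized by a deterministic Muller automaton *)
Definition regular (L : (nat -> X) -> Prop) : Prop :=
  exists (Q : finType) (f : Q -> X -> Q) (qin : Q) (T : (Q -> Prop) -> Prop),
    forall xi, L xi <-> T (fM f qin xi).

Definition openw (L : (nat -> X) -> Prop) : Prop :=
  forall xi, L xi -> exists n, forall eta, (forall i, i < n -> eta i = xi i) -> L eta.

Definition closedw (L : (nat -> X) -> Prop) : Prop := openw (fun xi => ~ L xi).

Definition sigma2 (L : (nat -> X) -> Prop) : Prop :=
  exists C : nat -> (nat -> X) -> Prop,
    (forall n, closedw (C n)) /\ (forall xi, L xi <-> exists n, C n xi).

Definition RSigma0 (L : (nat -> X) -> Prop) : Prop := regular L /\ openw L.
Definition RSigma1 (L : (nat -> X) -> Prop) : Prop := regular L /\ sigma2 L.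

End Automata.

(* A forest (F, c) in F_{T_k}: F a finite set of nonempty nat-sequences closed
   under nonempty prefixes; c(tau) = (ftree tau, flab tau) a finite
   prefix-closed tree with labels in 'I_k. *)
Record forest (k : nat) := Forest {
  fF : seq (seq nat);
  ftree : seq nat -> seq (seq nat);
  flab : seq nat -> seq nat -> 'I_k;
  fF_nonempty : forall tau, tau \in fF -> tau != [::];
  fF_prefix : forall tau, tau \in fF -> forall n, 0 < n -> take n tau \in fF;
  ftree_prefix : forall tau, tau \in fF ->
     forall sigma, sigma \in ftree tau -> forall n, take n sigma \in ftree tau
}.

(* L(F): k-partitions of S determined by some F-family over the 2-base (L0, L1) *)
Definition LF (S : Type) (L0 L1 : (S -> Prop) -> Prop) (k : nat) (F : forest k)
  (A : S -> 'I_k) : Prop :=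
  exists (U : seq nat -> S -> Prop) (B : seq nat -> seq nat -> S -> Prop),
    let Ut := fun tau x => U tau x /\ ~ (exists i, rcons tau i \in fF F /\ U (rcons tau i) x) in
    let Us := fun tau sigma x => Ut tau x /\ B tau sigma x in
    (forall tau, tau \in fF F -> L0 (U tau)) /\
        (forall tau i x, tau \in fF F -> rcons tau i \in fF F -> U (rcons tau i) x -> U tau x) /\
        (forall x, exists2 tau, tau \in fF F & U tau x) /\
        (forall tau sigma, tau \in fF F -> sigma \in ftree F tau -> L1 (B tau sigma)) /\
        (forall tau sigma i x, tau \in fF F -> sigma \in ftree F tau ->
            rcons sigma i \in ftree F tau -> Us tau (rcons sigma i) x -> Us tau sigma x) /\
        (forall tau x, tau \in fF F -> Ut tau x ->
            exists2 sigma, sigma \in ftree F tau & Us tau sigma x) /\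
        (forall tau sigma x, tau \in fF F -> sigma \in ftree F tau -> Us tau sigma x ->
            ~ (exists i, rcons sigma i \in ftree F tau /\ Us tau (rcons sigma i) x) ->
            A x = flab F tau sigma).

(* Main.v *)
Require Import Defs.
From mathcomp Require Import all_boot zify.
From Stdlib Require Import Classical ProofIrrelevance FunctionalExtensionality PropExtensionality IndefiniteDescription.
Set Implicit Arguments. Unset Strict Implicit. Unset Printing Implicit Defensive.

Definition feq (Q : Type) (a b : Q -> Prop) := forall q, a q <-> b q.

Lemma run_ext (X : finType) (Q : finType) (f : Q -> X -> Q) q (xi eta : nat -> X) n :
  (forall i, i < n -> eta i = xi i) -> run f q eta n = run f q xi n.
Proof.
elim: n => [//|n IH] H /=.
rewrite IH; last by move=> i Hi; apply: H; lia.
by rewrite H.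
Qed.

Lemma run_shift (X : finType) (Q : finType) (f : Q -> X -> Q) q (xi : nat -> X) m n :
  run f q xi (m + n) = run f (run f q xi m) (fun i => xi (m + i)) n.
Proof. by elim: n => [|n IH]; rewrite ?addn0 // addnS /= IH. Qed.

Lemma foldl_mkseq (X : finType) (Q : finType) (f : Q -> X -> Q) q (xi : nat -> X) n :
  foldl f q (mkseq xi n) = run f q xi n.
Proof. by elim: n => [//|n IH]; rewrite mkseqS foldl_rcons IH. Qed.

Definition catw (X : Type) (u : seq X) (xi : nat -> X) : nat -> X :=
  fun i => if i < size u then nth (xi 0) u i else xi (i - size u).

Lemma run_catw_le (X : finType) (Q : finType) (f : Q -> X -> Q) q u xi t :
  t <= size u -> run f q (catw u xi) t = foldl f q (take t u).
Proof.
elim: t => [|t IH] Ht /=; first by rewrite take0.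
rewrite IH; last lia.
rewrite (take_nth (xi 0)) // foldl_rcons /catw.
by have -> : t < size u by lia.
Qed.

Lemma run_catw_ge (X : finType) (Q : finType) (f : Q -> X -> Q) q u xi n :
  run f q (catw u xi) (size u + n) = run f (foldl f q u) xi n.
Proof.
rewrite run_shift run_catw_le // take_size.
apply: run_ext => i _; rewrite /catw.
have -> : (size u + i < size u) = false by lia.
by have -> : size u + i - size u = i by lia.
Qed.

Lemma fM_tail (X : finType) (Q : finType) (f : Q -> X -> Q) q1 q2 (xi1 xi2 : nat -> X) m :
  (forall n, run f q1 xi1 (m + n) = run f q2 xi2 n) -> feq (fM f q1 xi1) (fM f q2 xi2).
Proof.
move=> H s; split => Hs N.
- have [n [Hn Hr]] := Hs (m + N).
  exists (n - m); split; first lia.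
  by rewrite -H; have -> : m + (n - m) = n by lia.
- have [n [Hn Hr]] := Hs N.
  exists (m + n); split; first lia.
  by rewrite H.
Qed.

Lemma fM_shift (X : finType) (Q : finType) (f : Q -> X -> Q) q (xi : nat -> X) m :
  feq (fM f q xi) (fM f (run f q xi m) (fun i => xi (m + i))).
Proof. apply: (fM_tail (m := m)) => n; exact: run_shift. Qed.

Lemma fM_catw (X : finType) (Q : finType) (f : Q -> X -> Q) q u (xi : nat -> X) :
  feq (fM f q (catw u xi)) (fM f (foldl f q u) xi).
Proof. apply: (fM_tail (m := size u)) => n; exact: run_catw_ge. Qed.

Lemma fin_bound_seq (Q : eqType) (R : Q -> nat -> Prop) (s : seq Q) :
  (forall x, x \in s -> exists N, forall n, N <= n -> R x n) ->
  exists N, forall x n, x \in s -> N <= n -> R x n.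
Proof.
elim: s => [|a s IH] H; first by exists 0.
have [N1 H1] := H a (mem_head _ _).
have [N2 H2] : exists N, forall x n, x \in s -> N <= n -> R x n.
  by apply: IH => x Hx; apply: H; rewrite in_cons Hx orbT.
exists (maxn N1 N2) => x n; rewrite in_cons => /orP [/eqP -> | Hx] Hn.
- apply: H1; lia.
- apply: H2 => //; lia.
Qed.

Lemma fin_bound (Q : finType) (R : Q -> nat -> Prop) :
  (forall x, exists N, forall n, N <= n -> R x n) ->
  exists N, forall x n, N <= n -> R x n.
Proof.
move=> H; have [N HN] := @fin_bound_seq Q R (enum Q) (fun x _ => H x).
by exists N => x n; apply: HN; rewrite mem_enum.
Qed.

Lemma fM_event (X : finType) (Q : finType) (f : Q -> X -> Q) q (xi : nat -> X) :
  exists m, forall t, m <= t -> fM f q xi (run f q xi t).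
Proof.
have [N HN] : exists N, forall s n, N <= n -> fM f q xi s \/ run f q xi n <> s.
  apply: fin_bound => s.
  case: (classic (fM f q xi s)) => Hs; first by exists 0 => n _; left.
  have [N HN] : exists N, ~ exists n, N <= n /\ run f q xi n = s.
    by apply: not_all_ex_not.
  exists N => n Hn; right => Hr; apply: HN; by exists n.
exists N => t Ht; by case: (HN (run f q xi t) t Ht).
Qed.

Definition det (X : finType) (Q : finType) (f : Q -> X -> Q) (qin : Q) (L : (nat -> X) -> Prop) :=
  forall xi xi', feq (fM f qin xi) (fM f qin xi') -> L xi -> L xi'.

Lemma feq_eq (Q : Type) (a b : Q -> Prop) : feq a b -> a = b.
Proof. move=> H; apply: functional_extensionality => q; apply: propositional_extensionality; exact: H. Qed.

Lemma regular_det (X : finType) (L : (nat -> X) -> Prop) :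
  regular L -> exists (Q : finType) (f : Q -> X -> Q) (qin : Q), det f qin L.
Proof.
move=> [Q [f [qin [T HT]]]]; exists Q, f, qin => xi xi' /feq_eq E.
by rewrite !HT E.
Qed.

Definition prodf (X : finType) (Q1 Q2 : finType) (f1 : Q1 -> X -> Q1) (f2 : Q2 -> X -> Q2) :
  (Q1 * Q2)%type -> X -> (Q1 * Q2)%type := fun p x => (f1 p.1 x, f2 p.2 x).

Lemma run_prod (X : finType) (Q1 Q2 : finType) (f1 : Q1 -> X -> Q1) (f2 : Q2 -> X -> Q2) q1 q2 xi n :
  run (prodf f1 f2) (q1, q2) xi n = (run f1 q1 xi n, run f2 q2 xi n).
Proof. by elim: n => [//|n IH] /=; rewrite IH. Qed.

Lemma fM_proj1 (X : finType) (Q1 Q2 : finType) (f1 : Q1 -> X -> Q1) (f2 : Q2 -> X -> Q2) q1 q2 xi a :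
  fM f1 q1 xi a <-> exists b, fM (prodf f1 f2) (q1, q2) xi (a, b).
Proof.
split.
- move=> Ha; apply: NNPP => Hn.
  have Hb : forall b, exists N, forall n, N <= n -> run (prodf f1 f2) (q1, q2) xi n <> (a, b).
    move=> b; have Hb := not_ex_all_not _ _ Hn b.
    have [N HN] := not_all_ex_not _ _ Hb.
    exists N => n Hn' Hr; apply: HN; by exists n.
  have [N HN] := fin_bound Hb.
  have [n [Hn0 Hr]] := Ha N.
  apply: (HN (run f2 q2 xi n) n Hn0); by rewrite run_prod Hr.
- move=> [b Hb] N; have [n [Hn Hr]] := Hb N.
  exists n; split => //; move: Hr; rewrite run_prod; by case.
Qed.

Lemma fM_proj2 (X : finType) (Q1 Q2 : finType) (f1 : Q1 -> X -> Q1) (f2 : Q2 -> X -> Q2) q1 q2 xi b :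
  fM f2 q2 xi b <-> exists a, fM (prodf f1 f2) (q1, q2) xi (a, b).
Proof.
split.
- move=> Ha; apply: NNPP => Hn.
  have Hb : forall a, exists N, forall n, N <= n -> run (prodf f1 f2) (q1, q2) xi n <> (a, b).
    move=> a; have Hb := not_ex_all_not _ _ Hn a.
    have [N HN] := not_all_ex_not _ _ Hb.
    exists N => n Hn' Hr; apply: HN; by exists n.
  have [N HN] := fin_bound Hb.
  have [n [Hn0 Hr]] := Ha N.
  apply: (HN (run f1 q1 xi n) n Hn0); by rewrite run_prod Hr.
- move=> [a Hb] N; have [n [Hn Hr]] := Hb N.
  exists n; split => //; move: Hr; rewrite run_prod; by case.
Qed.

Definition Good (X : finType) (D : ((nat -> X) -> Prop) -> Prop) :=
  exists (Q : finType) (f : Q -> X -> Q) (qin : Q), forall L, D L -> det f qin L.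

Lemma Good_union (X : finType) (D1 D2 : ((nat -> X) -> Prop) -> Prop) :
  Good D1 -> Good D2 -> Good (fun L => D1 L \/ D2 L).
Proof.
move=> [Q1 [f1 [q1 H1]]] [Q2 [f2 [q2 H2]]].
exists (Q1 * Q2)%type, (prodf f1 f2), (q1, q2) => L [HL|HL] xi xi' E.
- apply: (H1 L HL) => a; rewrite !(fM_proj1 f1 f2 q1 q2).
  by split => [[b Hb]|[b Hb]]; exists b; apply/E.
- apply: (H2 L HL) => b; rewrite !(fM_proj2 f1 f2 q1 q2).
  by split => [[a Hb]|[a Hb]]; exists a; apply/E.
Qed.

Lemma Good_mono (X : finType) (D1 D2 : ((nat -> X) -> Prop) -> Prop) :
  Good D1 -> (forall L, D2 L -> D1 L) -> Good D2.
Proof. move=> [Q [f [q H]]] Hs; exists Q, f, q => L HL; exact: H (Hs _ HL). Qed.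

Lemma Good_seq (X : finType) (T : eqType) (s : seq T) (P : T -> ((nat -> X) -> Prop) -> Prop) :
  (forall t, t \in s -> Good (P t)) -> Good (fun L => exists2 t, t \in s & P t L).
Proof.
elim: s => [|a s IH] H.
  exists unit, (fun _ _ => tt), tt => L [t]; by rewrite in_nil.
apply: (@Good_mono _ (fun L => P a L \/ exists2 t, t \in s & P t L)).
  apply: Good_union; first by apply: H; exact: mem_head.
  by apply: IH => t Ht; apply: H; rewrite in_cons Ht orbT.
move=> L [t]; rewrite in_cons => /orP [/eqP -> | Ht] HP; first by left.
by right; exists t.
Qed.

Lemma Good_one (X : finType) (L0 : (nat -> X) -> Prop) : regular L0 -> Good (fun L => L = L0).
Proof. move=> /regular_det [Q [f [q H]]]; exists Q, f, q => L ->; exact: H. Qed.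

Lemma feq_trans (Q : Type) (a b c : Q -> Prop) : feq a b -> feq b c -> feq a c.
Proof. move=> H1 H2 q; rewrite H1; exact: H2. Qed.
Lemma feq_sym (Q : Type) (a b : Q -> Prop) : feq a b -> feq b a.
Proof. move=> H q; by rewrite H. Qed.

Lemma take_mkseq (T : Type) (g : nat -> T) t n : t <= n -> take t (mkseq g n) = mkseq g t.
Proof.
elim: n => [|n IH] Ht; first by have -> : t = 0 by lia.
case: (ltngtP t n.+1) => H; [|lia|].
- by rewrite mkseqS -cats1 takel_cat ?size_mkseq ?IH //; lia.
- by rewrite H -{1}(size_mkseq g n.+1) take_size.
Qed.

Lemma open_up (X : finType) (Q : finType) (f : Q -> X -> Q) (qin : Q) (L : (nat -> X) -> Prop)
  xc xd q q' :
  openw L -> det f qin L -> L xc -> fM f qin xc q -> fM f qin xd q' -> reachable f q q' -> L xd.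
Proof.
move=> Ho Hd Lc Hq Hq' [w Hw].
have [l Hl] := Ho xc Lc.
have [t [Ht Hrt]] := Hq l.
have [m [_ Hrm]] := Hq' 0.
set eta := catw (mkseq xc t ++ w) (fun i => xd (m + i)).
have Le : L eta.
  apply: Hl => i Hi; rewrite /eta /catw size_cat size_mkseq.
  have H1 : i < t + size w by lia.
  have H2 : i < t by lia.
  by rewrite H1 nth_cat size_mkseq H2 nth_mkseq.
apply: (Hd eta) => //.
apply: feq_trans; first exact: fM_catw.
rewrite foldl_cat foldl_mkseq Hrt Hw -Hrm.
apply: feq_sym; exact: fM_shift.
Qed.

Fixpoint build (X : Type) (u0 : seq X) (h : nat -> seq X -> seq X) (n : nat) : seq X :=
  if n is m.+1 then build u0 h m ++ h m (build u0 h m) else u0.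

Lemma build_prefix (X : Type) (u0 : seq X) h n m : n <= m -> exists v, build u0 h m = build u0 h n ++ v.
Proof.
elim: m => [|m IH] Hnm.
  have -> : n = 0 by lia.
  by exists [::]; rewrite cats0.
case: (ltngtP n m.+1) => H; [|lia|].
- have [v Hv] := IH (ltac:(lia)); exists (v ++ h m (build u0 h m)); by rewrite /= Hv catA.
- by rewrite H; exists [::]; rewrite cats0.
Qed.

Lemma build_size (X : Type) (u0 : seq X) h n :
  (forall m u, 0 < size (h m u)) -> n <= size (build u0 h n).
Proof.
move=> Hh; elim: n => [//|n IH] /=; rewrite size_cat; have := Hh n (build u0 h n); lia.
Qed.

Definition limw (X : Type) (x0 : X) (u0 : seq X) h : nat -> X := fun i => nth x0 (build u0 h i.+1) i.

Lemma limw_agree (X : Type) (x0 : X) (u0 : seq X) h n i :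
  (forall m u, 0 < size (h m u)) -> i < size (build u0 h n) -> limw x0 u0 h i = nth x0 (build u0 h n) i.
Proof.
move=> Hh Hi; rewrite /limw.
case: (leqP n i.+1) => H.
- have [v ->] := build_prefix u0 h H; by rewrite nth_cat Hi.
- have [v ->] := build_prefix u0 h (ltnW H).
  have Hs := build_size u0 i.+1 Hh.
  by rewrite nth_cat; have -> : i < size (build u0 h i.+1) by lia.
Qed.

Lemma sigma2_down (X : finType) (Q : finType) (f : Q -> X -> Q) (qin : Q) (L : (nat -> X) -> Prop)
  xc xd :
  sigma2 L -> det f qin L -> L xc -> (forall q, fM f qin xd q -> fM f qin xc q) -> L xd.
Proof.
move=> [C [HC HL]] Hd Lc Hsub.
apply: NNPP => Nd.
have [m0 Hm0] := fM_event f qin xd.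
pose p := run f qin xd m0.
pose xid := fun i => xd (m0 + i).
have Hdp : feq (fM f qin xd) (fM f p xid) := fM_shift f qin xd m0.
have Hpd : fM f qin xd p := Hm0 m0 (leqnn _).
have Hpc : fM f qin xc p := Hsub _ Hpd.
have [m1 Hm1] := fM_event f qin xc.
have [t1 [Ht1 Hrt1]] := Hpc m1.
have [t2 Ht2] : exists t2, forall s, fM f qin xc s -> exists t, t1 <= t <= t2 /\ run f qin xc t = s.
  have Hb : forall s, exists N, forall n, N <= n -> fM f qin xc s -> exists t, t1 <= t <= n /\ run f qin xc t = s.
    move=> s; case: (classic (fM f qin xc s)) => Hs; last by exists 0 => n _ /Hs.
    have [t [Ht Hr]] := Hs t1.
    exists t => n Hn _; exists t; split => //; lia.
  have [N HN] := @fin_bound Q (fun s n => fM f qin xc s -> exists t, t1 <= t <= n /\ run f qin xc t = s) Hb.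
  by exists N => s; apply: HN.
have [t3 [Ht3 Hrt3]] := Hpc t2.+1.
have Ht12 : t1 <= t2 by have [t [Ht _]] := Ht2 p Hpc; lia.
pose wc := mkseq (fun i => xc (t1 + i)) (t3 - t1).
have Hwc_size : 0 < size wc by rewrite size_mkseq; lia.
have Hwc_take : forall t, t <= size wc -> foldl f p (take t wc) = run f qin xc (t1 + t).
  move=> t Ht; rewrite size_mkseq in Ht.
  by rewrite take_mkseq // foldl_mkseq -Hrt1 -run_shift.
have Hwc_end : foldl f p wc = p.
  rewrite -{1}(take_size wc) Hwc_take // size_mkseq.
  by have -> : t1 + (t3 - t1) = t3 by lia.
have Hwc_in : forall t, t <= size wc -> fM f qin xc (foldl f p (take t wc)).
  move=> t Ht; rewrite Hwc_take //; apply: Hm1; lia.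
have Hwc_all : forall s, fM f qin xc s -> exists2 t, t <= size wc & foldl f p (take t wc) = s.
  move=> s Hs; have [t [Ht Hr]] := Ht2 s Hs.
  exists (t - t1); first by rewrite size_mkseq; lia.
  rewrite Hwc_take; last by rewrite size_mkseq; lia.
  by have -> : t1 + (t - t1) = t by lia.
have J : forall n (u : seq X), exists j, (foldl f qin u = p -> forall eta,
     (forall i, i < size u + j -> eta i = catw u xid i) -> ~ C n eta) /\ run f p xid j = p.
  move=> n u.
  have Hpp : fM f p xid p by apply/Hdp.
  case: (classic (foldl f qin u = p)) => Hu; last first.
    by have [j [_ Hj]] := Hpp 0; exists j; split.
  have NC : ~ C n (catw u xid).
    move=> Cn; apply: Nd; apply: (Hd (catw u xid)); last by apply/HL; exists n.
    apply: feq_trans; first exact: fM_catw.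
    rewrite Hu; exact: feq_sym Hdp.
  have [l Hl] := HC n _ NC.
  have [j [Hj Hrj]] := Hpp l.
  exists j; split => // _ eta Heta; apply: Hl => i Hi; apply: Heta; lia.
pose Jf n u := proj1_sig (constructive_indefinite_description _ (J n u)).
have HJf : forall n u, (foldl f qin u = p -> forall eta,
     (forall i, i < size u + Jf n u -> eta i = catw u xid i) -> ~ C n eta) /\ run f p xid (Jf n u) = p
  := fun n u => proj2_sig (constructive_indefinite_description _ (J n u)).
pose h n u := mkseq xid (Jf n u) ++ wc.
pose u0 := mkseq xd m0.
have Hh : forall m u, 0 < size (h m u) by move=> m u; rewrite size_cat; lia.
pose B := build u0 h.
have BS : forall n, B n.+1 = B n ++ (mkseq xid (Jf n (B n)) ++ wc) by [].
have Hinv : forall n, foldl f qin (B n) = p.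
  elim => [|n IH]; first by rewrite /= foldl_mkseq.
  by rewrite BS foldl_cat IH foldl_cat foldl_mkseq (proj2 (HJf n _)) Hwc_end.
pose eta := limw (xd 0) u0 h.
have Heta : forall n i, i < size (B n) -> eta i = nth (xd 0) (B n) i.
  by move=> n i Hi; apply: limw_agree.
have NCe : forall n, ~ C n eta.
  move=> n; apply: (proj1 (HJf n (B n))) (Hinv n) _ _ => i Hi.
  rewrite (Heta n.+1 i); last by rewrite BS !size_cat size_mkseq; lia.
  rewrite BS nth_cat /catw.
  case: ifP => Hib; first by apply: set_nth_default.
  rewrite nth_cat size_mkseq.
  have -> : i - size (B n) < Jf n (B n) by lia.
  rewrite nth_mkseq //; lia.
have Hrun : forall n t, t <= size (B n) -> run f qin eta t = foldl f qin (take t (B n)).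
  move=> n t Ht; rewrite -(@run_catw_le _ _ f qin (B n) eta t Ht); apply: run_ext => i Hi.
  rewrite (Heta n); last lia.
  rewrite /catw; have -> : i < size (B n) by lia.
  apply: set_nth_default; lia.
have Hin : forall n t, size u0 <= t <= size (B n) -> fM f qin xc (foldl f qin (take t (B n))).
  elim => [|n IH] t Ht.
    move: Ht; rewrite /B /= => Ht.
    move/andP: Ht => [H1 H2].
    have -> : t = size u0 by apply/eqP; rewrite eqn_leq H1 H2.
    by rewrite take_size /u0 foldl_mkseq.
  rewrite BS.
  case: (leqP t (size (B n))) => Hts.
    rewrite takel_cat //; apply: IH; lia.
  rewrite take_cat ltnNge (ltnW Hts) /= foldl_cat Hinv take_cat size_mkseq.
  case: ifP => Htj.
    rewrite take_mkseq; last lia.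
    rewrite foldl_mkseq; apply: Hsub; rewrite /p -run_shift; apply: Hm0; lia.
  move/negbT: Htj; rewrite -leqNgt => Htj.
  rewrite foldl_cat foldl_mkseq (proj2 (HJf n (B n))); apply: Hwc_in.
  move: Ht; rewrite BS !size_cat size_mkseq => /andP [_ Ht].
  move: Hts Htj Ht; move: (size (B n)) (Jf n (B n)) (size wc) => a b c; lia.
have Hfeq : feq (fM f qin xc) (fM f qin eta).
  move=> s; split.
  - move=> Hs N.
    have [t Ht Hts] := Hwc_all s Hs.
    have HN : N <= size (B N) := build_size u0 N Hh.
    exists (size (B N) + Jf N (B N) + t); split; first lia.
    rewrite (Hrun N.+1); last by rewrite BS !size_cat size_mkseq; lia.
    rewrite BS take_cat.
    have -> : (size (B N) + Jf N (B N) + t < size (B N)) = false by lia.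
    rewrite take_cat size_mkseq.
    have -> : (size (B N) + Jf N (B N) + t - size (B N) < Jf N (B N)) = false by lia.
    have -> : size (B N) + Jf N (B N) + t - size (B N) - Jf N (B N) = t by lia.
    by rewrite !foldl_cat Hinv foldl_mkseq (proj2 (HJf N (B N))).
  - move=> Hs; have [t [Ht Hrt]] := Hs (size u0).
    have Hbt : t <= size (B t) := build_size u0 t Hh.
    rewrite -Hrt (Hrun t t) //; apply: Hin; lia.
have Le : L eta := Hd xc eta Hfeq Lc.
have [n Cn] := proj1 (HL eta) Le.
exact: NCe n Cn.
Qed.

Lemma CM_regular (X : finType) (Q : finType) (f : Q -> X -> Q) (qin : Q) (P : CM f qin -> Prop) :
  regular (fun xi => P (toCM f qin xi)).
Proof.
exists Q, f, qin, (fun c => exists h : (exists xi, fM f qin xi = c), P (exist _ c h)) => xi.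
split; first by move=> H; exists (ex_intro (fun xi0 => fM f qin xi0 = fM f qin xi) xi erefl).
move=> [h Hh]; by rewrite /toCM (proof_irrelevance _ (ex_intro (fun xi0 => fM f qin xi0 = fM f qin xi) xi erefl) h).
Qed.

Lemma CM0_open (X : finType) (Q : finType) (f : Q -> X -> Q) (qin : Q) (P : CM f qin -> Prop) :
  CM0 P -> openw (fun xi => P (toCM f qin xi)).
Proof.
move=> HP xi Pxi.
have [m Hm] := fM_event f qin xi.
exists m => eta Heta; apply: (HP (toCM f qin xi)) Pxi.
have [m' Hm'] := fM_event f qin eta.
exists (run f qin xi m), (run f qin eta (maxn m m')); split; first by apply: Hm.
split; first by apply: Hm'; lia.
exists (mkseq (fun i => eta (m + i)) (maxn m m' - m)).
rewrite foldl_mkseq -(@run_ext _ _ f qin xi eta m Heta) -run_shift.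
by have -> : m + (maxn m m' - m) = maxn m m' by lia.
Qed.

Lemma CM1_sigma2 (X : finType) (Q : finType) (f : Q -> X -> Q) (qin : Q) (P : CM f qin -> Prop) :
  CM1 P -> sigma2 (fun xi => P (toCM f qin xi)).
Proof.
move=> HP.
exists (fun n xi => exists c : CM f qin, P c /\ forall t, n <= t -> sval c (run f qin xi t)); split.
- move=> n xi NC.
  have Hb : forall s, exists N, forall N', N <= N' -> (exists t, n <= t /\ run f qin xi t = s) ->
       exists t, n <= t < N' /\ run f qin xi t = s.
    move=> s; case: (classic (exists t, n <= t /\ run f qin xi t = s)) => Hs; last first.
      by exists 0 => N' _ /Hs.
    have [t [Ht Hr]] := Hs; exists t.+1 => N' HN' _; exists t; split => //; lia.
  have [N HN] := fin_bound Hb.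
  exists N => eta Heta [c [Pc Hc]]; apply: NC; exists c; split => // t Ht.
  have [t' [Ht' Hr']] := HN (run f qin xi t) N (leqnn _) (ex_intro _ t (conj Ht erefl)).
  rewrite -Hr' -(@run_ext _ _ f qin xi eta t'); first by apply: Hc; lia.
  move=> i Hi; apply: Heta; lia.
- move=> xi; split.
  + move=> Pxi; have [m Hm] := fM_event f qin xi.
    by exists m, (toCM f qin xi); split.
  + move=> [n [c [Pc Hc]]]; apply: (HP c) Pc => q Hq.
    have [t [Ht <-]] := Hq n; exact: Hc.
Qed.

Lemma foldr_max_bound (s : seq (seq nat)) x :
  x \in s -> size x <= foldr (fun x m => maxn (size x) m) 0 s.
Proof.
elim: s => [//|a s IH]; rewrite in_cons => /orP [/eqP -> | Hx] /=.
- exact: leq_maxl.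
- apply: leq_trans (IH Hx) _; exact: leq_maxr.
Qed.

Lemma descent (s : seq (seq nat)) (Pp : seq nat -> Prop) s0 :
  s0 \in s -> Pp s0 ->
  exists2 t, t \in s & Pp t /\ ~ (exists i, rcons t i \in s /\ Pp (rcons t i)).
Proof.
pose M := foldr (fun x m => maxn (size x) m) 0 s.
have HM : forall x, x \in s -> size x <= M := fun x => @foldr_max_bound s x.
suff: forall n t, M - size t <= n -> t \in s -> Pp t ->
  exists2 t, t \in s & Pp t /\ ~ (exists i, rcons t i \in s /\ Pp (rcons t i)).
  by move=> H; apply: (H (M - size s0)).
elim => [|n IH] t Hn Ht Pt.
- exists t => //; split => // [[i [Hi _]]].
  have := HM _ Hi; rewrite size_rcons; lia.
- case: (classic (exists i, rcons t i \in s /\ Pp (rcons t i))) => Hc; last by exists t.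
  have [i [Hi Pi]] := Hc.
  apply: (IH (rcons t i)) => //.
  have := HM _ Hi; rewrite size_rcons; lia.
Qed.

Definition Utf (S : Type) k (F : forest k) (U : seq nat -> S -> Prop) tau x :=
  U tau x /\ ~ (exists i, rcons tau i \in fF F /\ U (rcons tau i) x).

Lemma LF_agree (S : Type) k (F : forest k) (A : S -> 'I_k) (U : seq nat -> S -> Prop)
  (B : seq nat -> seq nat -> S -> Prop) :
  (forall x, exists2 tau, tau \in fF F & U tau x) ->
  (forall tau x, tau \in fF F -> Utf F U tau x ->
            exists2 sigma, sigma \in ftree F tau & (Utf F U tau x /\ B tau sigma x)) ->
  (forall tau sigma x, tau \in fF F -> sigma \in ftree F tau -> (Utf F U tau x /\ B tau sigma x) ->
            ~ (exists i, rcons sigma i \in ftree F tau /\ (Utf F U tau x /\ B tau (rcons sigma i) x)) ->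
            A x = flab F tau sigma) ->
  forall x y, (forall tau, tau \in fF F -> (U tau x <-> U tau y)) ->
  (forall tau sigma, tau \in fF F -> sigma \in ftree F tau -> (B tau sigma x <-> B tau sigma y)) ->
  A x = A y.
Proof.
move=> H3 H6 H7 x y HU HB.
have [tau0 Ht0 HU0] := H3 x.
have [tau Htau [HUt HUn]] := descent (Pp := fun t => U t x) Ht0 HU0.
have Utx : Utf F U tau x by split.
have [sigma0 Hs0 Us0] := H6 tau x Htau Utx.
have [sigma Hsig [Usx Usn]] := descent (Pp := fun s => Utf F U tau x /\ B tau s x) Hs0 Us0.
rewrite (H7 tau sigma x Htau Hsig Usx Usn).
have Uty : Utf F U tau y.
  split; first by apply/HU.
  move=> [i [Hi HUi]]; apply: HUn; exists i; split => //; by apply/(HU _ Hi).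
symmetry; apply: (H7 tau sigma y Htau Hsig).
- split => //; apply/HB => //; exact: Usx.2.
- move=> [i [Hi [_ HBi]]]; apply: Usn; exists i; split => //; split => //.
  by apply/(HB _ _ Htau Hi).
Qed.

Theorem proposition4p15 (X : finType) (k : nat) (F : forest k) :
  1 < #|X| -> 2 <= k ->
  forall A : (nat -> X) -> 'I_k,
    LF (@RSigma0 X) (@RSigma1 X) F A <->
    exists (Q : finType) (f : Q -> X -> Q) (qin : Q) (B : CM f qin -> 'I_k),
      LF (@CM0 X Q f qin) (@CM1 X Q f qin) F B /\
      A = (fun xi => B (toCM f qin xi)).
Proof.
move=> _ _ A; split.
- move=> [U [B [H1 [H2 [H3 [H4 [H5 [H6 H7]]]]]]]].
  have HG : Good (fun L => exists2 tau, tau \in fF F &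
               (L = U tau \/ exists2 sigma, sigma \in ftree F tau & L = B tau sigma)).
    apply: Good_seq => tau Htau; apply: Good_union.
      exact: Good_one (proj1 (H1 tau Htau)).
    apply: Good_seq => sigma Hsig; exact: Good_one (proj1 (H4 tau sigma Htau Hsig)).
  have [Q [f [qin HD]]] := HG.
  have dU : forall tau, tau \in fF F -> det f qin (U tau).
    by move=> tau Ht; apply: HD; exists tau => //; left.
  have dB : forall tau sigma, tau \in fF F -> sigma \in ftree F tau -> det f qin (B tau sigma).
    by move=> tau sigma Ht Hs; apply: HD; exists tau => //; right; exists sigma.
  pose rep (c : CM f qin) : nat -> X := proj1_sig (constructive_indefinite_description _ (proj2_sig c)).
  have rep_spec : forall c, fM f qin (rep c) = sval c
    := fun c => proj2_sig (constructive_indefinite_description _ (proj2_sig c)).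
  have Adet : forall xi xi', feq (fM f qin xi) (fM f qin xi') -> A xi = A xi'.
    move=> xi xi' E.
    apply: (@LF_agree _ k F A U B) => //.
    + move=> tau Ht; split; [exact: dU tau Ht _ _ E | exact: dU tau Ht _ _ (feq_sym E)].
    + move=> tau sigma Ht Hs; split; [exact: dB tau sigma Ht Hs _ _ E | exact: dB tau sigma Ht Hs _ _ (feq_sym E)].
  have Erep : forall xi, feq (fM f qin (rep (toCM f qin xi))) (fM f qin xi).
    by move=> xi q; rewrite rep_spec.
  exists Q, f, qin, (fun c => A (rep c)); split; last first.
    apply: functional_extensionality => xi; apply: Adet; exact: feq_sym (Erep xi).
  exists (fun tau c => U tau (rep c)), (fun tau sigma c => B tau sigma (rep c)).
  split.
    move=> tau Ht c d [q [q' [Hq [Hq' Hr]]]] Uc.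
    apply: (open_up (proj2 (H1 tau Ht)) (dU tau Ht) Uc (q := q) (q' := q')) => //.
    + by rewrite rep_spec.
    + by rewrite rep_spec.
  split; first by move=> tau i c; apply: H2.
  split; first by move=> c; apply: H3.
  split.
    move=> tau sigma Ht Hs c d Hle Bc.
    apply: (sigma2_down (proj2 (H4 tau sigma Ht Hs)) (dB tau sigma Ht Hs) Bc).
    move=> q; rewrite !rep_spec; exact: Hle.
  split; first by move=> tau sigma i c; apply: H5.
  split; first by move=> tau c; apply: H6.
  by move=> tau sigma c; apply: H7.
- move=> [Q [f [qin [Bc [[U [B [H1 [H2 [H3 [H4 [H5 [H6 H7]]]]]]]] ->]]]]].
  exists (fun tau xi => U tau (toCM f qin xi)), (fun tau sigma xi => B tau sigma (toCM f qin xi)).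
  split.
    move=> tau Ht; split; [exact: CM_regular | exact: CM0_open (H1 tau Ht)].
  split; first by move=> tau i xi; apply: H2.
  split; first by move=> xi; apply: H3.
  split.
    move=> tau sigma Ht Hs; split; [exact: CM_regular | exact: CM1_sigma2 (H4 tau sigma Ht Hs)].
  split; first by move=> tau sigma i xi; apply: H5.
  split; first by move=> tau xi; apply: H6.
  by move=> tau sigma xi; apply: H7.
Qed.
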